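(* Let $\vdash\subseteq Sqt$ satisfy (A), (Mon), (Cut), (Com), ($\wedge$I), ($\wedge$E), ($\to$0), ($\to$1), ($\to$2). Let $\varphi\in Form$ and $\Gamma,\Delta\subseteq Form$ with $\Delta$ nonempty and closed under $\wedge$ (i.e. $\alpha,\beta\in\Delta\Rightarrow\alpha\wedge\beta\in\Delta$). Then $\Gamma(\Delta,\varphi)$ is $\vdash$-deduction closed, $\Delta\cup\{\varphi\}\subseteq\Gamma(\Delta,\varphi)$, and $\Gamma R_\to\Gamma(\Delta,\varphi)$. Moreover, if $\Gamma$ is $\vdash$-deduction closed, then $\Gamma(\Delta,\varphi)$ is the smallest set of formulas having these three properties (i.e. it is contained in every $\vdash$-deduction closed $\Phi$ with $\Delta\cup\{\varphi\}\subseteq\Phi$ and $\Gamma R_\to\Phi$). In particular (taking $\Delta=Thm=\{\psi:\vdash\psi\}$), for every $\Gamma$ and $\varphi$, $\Gamma(Thm,\varphi)$ is $\vdash$-deduction closed, contains $\varphi$, and $\Gamma R_\to\Gamma(Thm,\varphi)$.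
   Context: $Form$: $\varphi::=p\mid\bot\mid(\varphi\wedge\varphi)\mid(\varphi\to\varphi)$ over a countable set $P0$ ($\wedge$ left-associative, binds tighter than $\to$). Sequents are pairs $(\Gamma,\varphi)$, $\Gamma\subseteq Form$; $\Gamma\vdash\varphi$ means $(\Gamma,\varphi)\in\vdash$, $\psi\vdash\varphi$ means $\{\psi\}\vdash\varphi$, $\vdash\varphi$ means $\emptyset\vdash\varphi$. Rules (for all $\Gamma,\Delta\subseteq Form$, formulas): (A) $\Gamma\cup\{\varphi\}\vdash\varphi$; (Mon) $\Gamma\subseteq\Delta$, $\Gamma\vdash\varphi\Rightarrow\Delta\vdash\varphi$; (Cut) $\Gamma\cup\{\psi\}\vdash\varphi$, $\Delta\vdash\psi\Rightarrow\Gamma\cup\Delta\vdash\varphi$; (Com) $\Gamma\vdash\varphi\Rightarrow\Gamma'\vdash\varphi$ for some finite $\Gamma'\subseteq\Gamma$; ($\wedge$I) $\{\varphi,\psi\}\vdash\varphi\wedge\psi$; ($\wedge$E) $\varphi\wedge\psi\vdash\varphi$ and $\varphi\wedge\psi\vdash\psi$; ($\to$0) $\vdash\varphi\to\varphi$; ($\to$1) $\Gamma\vdash\varphi\Rightarrow\{\psi\to\chi:\chi\in\Gamma\}\vdash\psi\to\varphi$; ($\to$2) $\{\varphi\to\psi,\psi\to\chi\}\vdash\varphi\to\chi$. $\Gamma$ is $\vdash$-deduction closed iff $\Gamma\vdash\psi$ implies $\psi\in\Gamma$. For $\Gamma,\Delta\subseteq Form$: $\Gamma R_\to\Delta$ iff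 for all $\varphi,\psi$, $\varphi\to\psi\in\Gamma$ and $\varphi\in\Delta$ imply $\psi\in\Delta$. $\Gamma(\Delta,\varphi)=\{\psi\in Form:$ there is $\alpha\in\Delta$ with $\Gamma\vdash\alpha\wedge\varphi\to\psi\}$. *)

(* Defs.v *)
From Stdlib Require Import List.
Import ListNotations.

(* Propositional atoms: the countable set P0 is represented by nat. *)
Inductive Form : Type :=
| Var : nat -> Form
| Bot : Form
| And : Form -> Form -> Form
| Imp : Form -> Form -> Form.

Definition FSet := Form -> Prop.

Definition subset (G D : FSet) : Prop := forall x, G x -> D x.
Definition union (G D : FSet) : FSet := fun x => G x \/ D x.
Definition sing (p : Form) : FSet := fun x => x = p.
Definition emptyset : FSet := fun _ => False.

(* A consequence relation: a set of sequents (Gamma, phi). *)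
Definition Cons := FSet -> Form -> Prop.

Section Rules.
Variable vd : Cons.

Definition R_A : Prop := forall G p, vd (union G (sing p)) p.
Definition R_Mon : Prop := forall G D p, subset G D -> vd G p -> vd D p.
Definition R_Cut : Prop :=
  forall G D p q, vd (union G (sing q)) p -> vd D q -> vd (union G D) p.
(* finite subset represented by a list *)
Definition R_Com : Prop :=
  forall G p, vd G p -> exists l : list Form,
      (forall x, In x l -> G x) /\ vd (fun x => In x l) p.
Definition R_AndI : Prop := forall p q, vd (fun x => x = p \/ x = q) (And p q).
Definition R_AndE : Prop :=
  forall p q, vd (sing (And p q)) p /\ vd (sing (And p q)) q.
Definition R_Imp0 : Prop := forall p, vd emptyset (Imp p p).
Definition R_Imp1 : Prop :=
  forall G p q, vd G p ->
    vd (fun x => exists c, G c /\ x = Imp q c) (Imp q p).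
Definition R_Imp2 : Prop :=
  forall p q r, vd (fun x => x = Imp p q \/ x = Imp q r) (Imp p r).

Definition AllRules : Prop :=
  R_A /\ R_Mon /\ R_Cut /\ R_Com /\ R_AndI /\ R_AndE /\ R_Imp0 /\ R_Imp1 /\ R_Imp2.

Definition ded_closed (G : FSet) : Prop := forall p, vd G p -> G p.

Definition Thm : FSet := fun p => vd emptyset p.

Definition GammaDP (G D : FSet) (phi : Form) : FSet :=
  fun psi => exists a, D a /\ vd G (Imp (And a phi) psi).

End Rules.

Definition R_imp (G D : FSet) : Prop :=
  forall p q, G (Imp p q) -> D p -> D q.

Definition and_closed (D : FSet) : Prop :=
  forall a b, D a -> D b -> D (And a b).

(* Main.v *)
Require Import Defs.
From Stdlib Require Import List.
Import ListNotations.

Section S.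
Context (vd : Cons) (HR : AllRules vd).

Lemma hA : R_A vd. Proof. apply HR. Qed.
Lemma hMon : R_Mon vd. Proof. apply HR. Qed.
Lemma hCut : R_Cut vd. Proof. apply HR. Qed.
Lemma hCom : R_Com vd. Proof. apply HR. Qed.
Lemma hAndI : R_AndI vd. Proof. apply HR. Qed.
Lemma hAndE : R_AndE vd. Proof. apply HR. Qed.
Lemma hImp0 : R_Imp0 vd. Proof. apply HR. Qed.
Lemma hImp1 : R_Imp1 vd. Proof. apply HR. Qed.
Lemma hImp2 : R_Imp2 vd. Proof. apply HR. Qed.

Lemma inA G p : G p -> vd G p.
Proof.
  intro Hp. apply (hMon (union G (sing p))).
  - intros x [Hx|Hx]; [exact Hx| unfold sing in Hx; subst; exact Hp].
  - apply hA.
Qed.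

Lemma trans_list : forall l G p, vd (union G (fun x => In x l)) p ->
  (forall x, In x l -> vd G x) -> vd G p.
Proof.
  induction l as [|a l IH]; intros G p H1 H2.
  - apply (hMon _ _ _ ( fun x (h : union G (fun x => In x []) x) =>
      match h with or_introl h => h | or_intror h => False_ind _ h end)) in H1.
    exact H1.
  - apply IH; [|intros; apply H2; simpl; auto].
    assert (H3 : vd (union (union G (fun x => In x l)) (sing a)) p).
    { refine (hMon _ _ _ _ H1). intros x [Hx|[Hx|Hx]]; unfold union, sing in *.
      - left;left;auto.
      - right;auto.
      - left;right;auto. }
    pose proof (hCut _ _ _ _ H3 (H2 a (or_introl eq_refl))) as H4.
    refine (hMon _ _ _ _ H4). intros x [Hx|Hx]; [exact Hx|left; exact Hx].
Qed.

Lemma trans (H G : FSet) p : (forall x, H x -> vd G x) -> vd H p -> vd G p.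
Proof.
  intros H1 H2. destruct (hCom _ _ H2) as [l [Hl Hp]].
  apply (trans_list l). 
  - refine (hMon _ _ _ _ Hp). intros x Hx; right; exact Hx.
  - intros; apply H1, Hl; auto.
Qed.

Lemma thm G p : vd emptyset p -> vd G p.
Proof. apply hMon. intros x []. Qed.

Lemma ded G x p : vd (sing x) p -> vd G (Imp x p).
Proof.
  intro H. pose proof (hImp1 _ _ x H) as H1.
  refine (trans _ _ _ _ H1). intros y [c [Hc Hy]]; unfold sing in Hc; subst;
     apply thm, hImp0.
Qed.

Lemma comp G p q r : vd G (Imp p q) -> vd G (Imp q r) -> vd G (Imp p r).
Proof.
  intros H1 H2. refine (trans _ _ _ _ (hImp2 p q r)). intros y [Hy|Hy]; subst; assumption.
Qed.

Lemma andI G p q : vd G p -> vd G q -> vd G (And p q).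
Proof.
  intros H1 H2. refine (trans _ _ _ _ (hAndI p q)). intros y [Hy|Hy]; subst; assumption.
Qed.

Lemma andE1 G p q : vd G (And p q) -> vd G p.
Proof. intro H. refine (trans _ _ _ _ (proj1 (hAndE p q))). intros y Hy; unfold sing in Hy; subst; exact H. Qed.
Lemma andE2 G p q : vd G (And p q) -> vd G q.
Proof. intro H. refine (trans _ _ _ _ (proj2 (hAndE p q))). intros y Hy; unfold sing in Hy; subst; exact H. Qed.

Lemma self x : vd (sing x) x.
Proof. apply inA. reflexivity. Qed.

Lemma t1 G a b phi : vd G (Imp (And (And a b) phi) (And a phi)).
Proof.
  apply ded. pose proof (self (And (And a b) phi)) as S.
  apply andI; [apply andE1 with b; apply andE1 with phi | apply andE2 with (And a b)]; exact S.
Qed.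
Lemma t2 G a b phi : vd G (Imp (And (And a b) phi) (And b phi)).
Proof.
  apply ded. pose proof (self (And (And a b) phi)) as S.
  apply andI; [apply andE2 with a; apply andE1 with phi | apply andE2 with (And a b)]; exact S.
Qed.

Lemma part1 (G D : FSet) (phi : Form) :
     (exists a, D a) -> and_closed D ->
     ded_closed vd (GammaDP vd G D phi)
     /\ subset (union D (sing phi)) (GammaDP vd G D phi)
     /\ R_imp G (GammaDP vd G D phi)
     /\ (ded_closed vd G ->
         forall Phi : FSet,
           ded_closed vd Phi -> subset (union D (sing phi)) Phi -> R_imp G Phi ->
           subset (GammaDP vd G D phi) Phi).
Proof.
  intros [a0 Ha0] HDc. split; [|split; [|split]].
  - intros psi Hpsi. destruct (hCom _ _ Hpsi) as [l [Hl Hp]].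
    assert (Hx : exists a, D a /\ forall x, In x l -> vd G (Imp (And a phi) x)).
    { clear Hp. induction l as [|y l IH].
      - exists a0. split; [exact Ha0| intros x []].
      - destruct IH as [a2 [Ha2 H2]]. { intros; apply Hl; simpl; auto. }
        destruct (Hl y (or_introl eq_refl)) as [a1 [Ha1 H1]].
        exists (And a1 a2). split; [apply HDc; auto|].
        intros x [Hx|Hx].
        + subst. eapply comp; [apply t1|exact H1].
        + eapply comp; [apply t2|apply H2; exact Hx]. }
    destruct Hx as [a [Ha Hall]]. exists a. split; [exact Ha|].
    pose proof (hImp1 _ _ (And a phi) Hp) as H1.
    refine (trans _ _ _ _ H1). intros y [c [Hc Hy]]; subst; apply Hall; exact Hc.
  - intros x [Hx|Hx].
    + exists x. split; [exact Hx|]. apply ded. apply andE1 with phi, self.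
    + unfold sing in Hx; subst. exists a0. split; [exact Ha0|].
      apply ded. apply andE2 with a0, self.
  - intros p q Hpq [a [Ha Hp]]. exists a. split; [exact Ha|].
    eapply comp; [exact Hp| apply inA; exact Hpq].
  - intros HG Phi HPd Hsub Himp psi [a [Ha Hp]].
    apply (Himp (And a phi)); [apply HG; exact Hp|].
    apply HPd. apply andI; apply inA, Hsub; [left; exact Ha|right; reflexivity].
Qed.

End S.

Theorem mainTheorem9 :
  forall vd : Cons, AllRules vd ->
  (forall (G D : FSet) (phi : Form),
     (exists a, D a) -> and_closed D ->
     ded_closed vd (GammaDP vd G D phi)
     /\ subset (union D (sing phi)) (GammaDP vd G D phi)
     /\ R_imp G (GammaDP vd G D phi)
     /\ (ded_closed vd G ->
         forall Phi : FSet,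
           ded_closed vd Phi -> subset (union D (sing phi)) Phi -> R_imp G Phi ->
           subset (GammaDP vd G D phi) Phi))
  /\
  (forall (G : FSet) (phi : Form),
     ded_closed vd (GammaDP vd G (Thm vd) phi)
     /\ GammaDP vd G (Thm vd) phi phi
     /\ R_imp G (GammaDP vd G (Thm vd) phi)).
Proof.
  intros vd HR. split.
  - intros. apply part1; auto.
  - intros G phi.
    destruct (part1 vd HR G (Thm vd) phi) as [H1 [H2 [H3 _]]].
    + exists (Imp phi phi). apply (hImp0 vd HR).
    + intros a b Ha Hb. apply (andI vd HR); assumption.
    + split; [exact H1|split; [apply H2; right; reflexivity|exact H3]].
Qed.
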